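(* Let $(\Omega,\mathcal A)$ be a Borel space, $(\Omega,X_\bullet)$ a Borel field of proper unbounded CAT(0) spaces, $x_\bullet\in\mathcal L(\Omega,X_\bullet)$ and $\xi_\bullet\in\mathcal L(\Omega,\partial X_\bullet)$. For $t\ge0$ let $c_{x_\bullet,\xi_\bullet}(t)$ be the section $\omega\mapsto c_{x_\omega,\xi_\omega}(t)$, where $c_{x_\omega,\xi_\omega}:[0,\infty)\to X_\omega$ is the unique geodesic ray with $c(0)=x_\omega$ and $c(\infty)=\xi_\omega$. Then $c_{x_\bullet,\xi_\bullet}(t)\in\mathcal L(\Omega,X_\bullet)$ for every $t\ge0$.
   Context: Borel field of metric spaces: $(X_\omega,d_\omega)_{\omega\in\Omega}$ metric spaces; a section is $x_\bullet=(x_\omega)$, $x_\omega\in X_\omega$. A Borel structure is a set $\mathcal L(\Omega,X_\bullet)$ of sections such that (a) $\omega\mapsto d_\omega(x_\omega,y_\omega)$ is Borel for all $x_\bullet,y_\bullet\in\mathcal L$; (b) any section $y_\bullet$ with $\omega\mapsto d_\omega(x_\omega,y_\omega)$ Borel for all $x_\bullet\in\mathcal L$ lies in $\mathcal L$; (c) there is a countable $\mathcal D=\{x^n_\bullet\}\subseteq\mathcal L$ with $\{x^n_\omega\}_n$ dense in $X_\omega$ for all $\omega$; elements of $\mathcal L$ are Borel sections. Boundary field: fix $x^0_\bullet\in\mathcal L(\Omega,X_\bullet)$; for $\xi\in\partial X_\omega$ (visual boundary, cone topology), $b_{x^0_\omega,\xi}(x)=\lim_{t\to\infty}(d_\omega(x,c(t))-d_\omega(x^0_\omega,c(t)))$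 with $c$ the ray from $x^0_\omega$ to $\xi$. A section $\xi_\bullet$ of $\partial X_\bullet$ is Borel, $\xi_\bullet\in\mathcal L(\Omega,\partial X_\bullet)$, iff $\omega\mapsto b_{x^0_\omega,\xi_\omega}(x_\omega)$ is Borel for every $x_\bullet\in\mathcal L(\Omega,X_\bullet)$ (this does not depend on $x^0_\bullet$). *)

(* Defs.v *)
From Stdlib Require Import Reals List.
Open Scope R_scope.

Record SigmaAlgebra (Om : Type) := {
  meas : (Om -> Prop) -> Prop;
  meas_full : meas (fun _ => True);
  meas_compl : forall A, meas A -> meas (fun w => ~ A w);
  meas_cunion : forall A : nat -> Om -> Prop,
      (forall n, meas (A n)) -> meas (fun w => exists n, A n w)
}.
Arguments meas {Om} s _.

Definition BorelFun {Om : Type} (S : SigmaAlgebra Om) (f : Om -> R) : Prop :=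
  forall a : R, meas S (fun w => f w < a).

Definition IsMetric {X : Type} (d : X -> X -> R) : Prop :=
  (forall x y, d x y = 0 <-> x = y) /\
  (forall x y, d x y = d y x) /\
  (forall x y z, d x z <= d x y + d y z).

Definition IsOpen {X : Type} (d : X -> X -> R) (U : X -> Prop) : Prop :=
  forall x, U x -> exists r, 0 < r /\ forall y, d x y < r -> U y.

Definition IsCompact {X : Type} (d : X -> X -> R) (K : X -> Prop) : Prop :=
  forall (I : Type) (U : I -> X -> Prop),
    (forall i, IsOpen d (U i)) ->
    (forall x, K x -> exists i, U i x) ->
    exists l : list I, forall x, K x -> exists i, In i l /\ U i x.

Definition Proper {X : Type} (d : X -> X -> R) : Prop :=
  forall (x : X) (r : R), IsCompact d (fun y => d x y <= r).

Definition Unbounded {X : Type} (d : X -> X -> R) : Prop :=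
  forall M : R, exists x y : X, M < d x y.

Definition GeodSeg {X : Type} (d : X -> X -> R) (c : R -> X) (x y : X) : Prop :=
  c 0 = x /\ c (d x y) = y /\
  forall s t, 0 <= s <= d x y -> 0 <= t <= d x y -> d (c s) (c t) = Rabs (s - t).

Definition GeodesicSpace {X : Type} (d : X -> X -> R) : Prop :=
  forall x y, exists c, GeodSeg d c x y.

Definition eucl (p q : R * R) : R :=
  sqrt ((fst p - fst q) ^ 2 + (snd p - snd q) ^ 2).

Definition comb (p q : R * R) (lam : R) : R * R :=
  (fst p + lam * (fst q - fst p), snd p + lam * (snd q - snd p)).

(* CAT(0) inequality for geodesic triangles (Bridson-Haefliger), for points
   on the two sides issuing from the vertex x (other pairs of sides are
   covered by relabelling the triangle; pairs on one side are trivial). *)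
Definition CAT0 {X : Type} (d : X -> X -> R) : Prop :=
  GeodesicSpace d /\
  forall (x y z : X) (c1 c2 c3 : R -> X) (xb yb zb : R * R),
    GeodSeg d c1 x y -> GeodSeg d c2 x z -> GeodSeg d c3 y z ->
    eucl xb yb = d x y -> eucl xb zb = d x z -> eucl yb zb = d y z ->
    forall s t, 0 <= s <= d x y -> 0 <= t <= d x z ->
      d (c1 s) (c2 t) <= eucl (comb xb yb (s / d x y)) (comb xb zb (t / d x z)).

Definition IsRay {X : Type} (d : X -> X -> R) (c : R -> X) : Prop :=
  forall s t, 0 <= s -> 0 <= t -> d (c s) (c t) = Rabs (s - t).

(* asymptotic rays = same point of the visual boundary *)
Definition Asymp {X : Type} (d : X -> X -> R) (c c' : R -> X) : Prop :=
  exists K, forall t, 0 <= t -> d (c t) (c' t) <= K.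

(* c is a geodesic ray from x to the boundary point represented by the ray xi *)
Definition RayTo {X : Type} (d : X -> X -> R) (c : R -> X) (x : X) (xi : R -> X) : Prop :=
  IsRay d c /\ c 0 = x /\ Asymp d c xi.

Definition LimInfty (f : R -> R) (l : R) : Prop :=
  forall eps, 0 < eps -> exists T, forall t, T <= t -> Rabs (f t - l) < eps.

Definition BusemannVal {X : Type} (d : X -> X -> R) (x0 : X) (xi : R -> X) (x : X) (b : R) : Prop :=
  exists c, RayTo d c x0 xi /\ LimInfty (fun t => d x (c t) - d x0 (c t)) b.

Definition BorelStructure {Om : Type} (S : SigmaAlgebra Om) (X : Om -> Type)
    (d : forall w, X w -> X w -> R) (L : (forall w, X w) -> Prop) : Prop :=
  (forall x y, L x -> L y -> BorelFun S (fun w => d w (x w) (y w))) /\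
  (forall y, (forall x, L x -> BorelFun S (fun w => d w (x w) (y w))) -> L y) /\
  (exists D : nat -> forall w, X w,
      (forall n, L (D n)) /\
      forall w (z : X w) eps, 0 < eps -> exists n, d w z (D n w) < eps).

(* xi (a section of boundary points, each represented by a ray) is a Borel
   section w.r.t. the base section x0 *)
Definition BorelBoundarySection {Om : Type} (S : SigmaAlgebra Om) (X : Om -> Type)
    (d : forall w, X w -> X w -> R) (L : (forall w, X w) -> Prop)
    (x0 : forall w, X w) (xi : forall w, R -> X w) : Prop :=
  forall x, L x -> exists g : Om -> R, BorelFun S g /\
    forall w, BusemannVal (d w) (x0 w) (xi w) (x w) (g w).

(* Main.v *)
Require Import Defs.
From Stdlib Require Import Reals Lra Psatz ZArith Classical FunctionalExtensionality PropExtensionality IndefiniteDescription.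
Open Scope R_scope.

Lemma met_refl {X} (d : X -> X -> R) : IsMetric d -> forall x, d x x = 0.
Proof. intros [H _] x. apply H. reflexivity. Qed.
Lemma met_sym {X} (d : X -> X -> R) : IsMetric d -> forall x y, d x y = d y x.
Proof. intros [_ [H _]]. exact H. Qed.
Lemma met_tri {X} (d : X -> X -> R) : IsMetric d -> forall x y z, d x z <= d x y + d y z.
Proof. intros [_ [_ H]]. exact H. Qed.
Lemma met_pos {X} (d : X -> X -> R) : IsMetric d -> forall x y, 0 <= d x y.
Proof. intros H x y. pose proof (met_tri d H x y x). rewrite (met_refl d H) in H0.
  rewrite (met_sym d H y x) in H0. lra. Qed.

Lemma alg1 a b s t u v : a <> 0 -> b <> 0 -> v^2 = b^2 - u^2 ->
  (0 + s/a*(a-0) - (0 + t/b*(u-0)))^2 + (0 + s/a*(0-0) - (0 + t/b*(v-0)))^2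
  = s^2 + t^2 - 2*s*t*u/b.
Proof. intros Ha Hb Hv.
  replace ((0 + s/a*(0-0) - (0 + t/b*(v-0)))^2) with ((t/b)^2 * v^2) by (field; auto).
  rewrite Hv. field. auto. Qed.

(* law of cosines comparison, multiplied form *)
Lemma L_cos {X} (d : X -> X -> R) (Hm : IsMetric d) (Hc : CAT0 d)
  x y z c1 c2 : GeodSeg d c1 x y -> GeodSeg d c2 x z ->
  0 < d x y -> 0 < d x z -> forall s t, 0 <= s <= d x y -> 0 <= t <= d x z ->
  d x y * d x z * (d (c1 s) (c2 t))^2 <=
  d x y * d x z * (s^2 + t^2) - s * t * (d x y ^2 + d x z ^2 - d y z ^2).
Proof.
  intros G1 G2 Ha Hb s t Hs Ht.
  set (a := d x y) in *. set (b := d x z) in *. set (e := d y z).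
  destruct Hc as [Hgeo Hcat].
  destruct (Hgeo y z) as [c3 G3].
  assert (He : 0 <= e) by apply (met_pos d Hm).
  assert (T1 : a <= b + e) by (unfold a, b, e; rewrite <- (met_sym d Hm z y) in *; 
     pose proof (met_tri d Hm x z y); rewrite (met_sym d Hm z y) in *; lra).
  assert (T2 : b <= a + e) by (unfold a, b, e; apply met_tri; auto).
  assert (T3 : e <= a + b) by (unfold a, b, e; pose proof (met_tri d Hm y x z);
     rewrite (met_sym d Hm y x) in H; lra).
  set (N := a^2 + b^2 - e^2).
  set (u := N / (2*a)).
  assert (Hu : u * (2*a) = N) by (unfold u; field; lra).
  assert (HN1 : N <= 2*a*b) by (unfold N; nra).
  assert (HN2 : - (2*a*b) <= N) by (unfold N; nra).
  assert (Hub : u <= b) by nra.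
  assert (Hub2 : -b <= u) by nra.
  assert (Hv0 : 0 <= b^2 - u^2) by nra.
  set (v := sqrt (b^2 - u^2)).
  assert (Hv : v^2 = b^2 - u^2) by (apply pow2_sqrt; auto).
  specialize (Hcat x y z c1 c2 c3 (0,0) (a,0) (u,v) G1 G2 G3).
  assert (E1 : eucl (0,0) (a,0) = a).
  { unfold eucl; cbn [fst snd]. replace ((0-a)^2 + (0-0)^2) with (a^2) by ring.
    apply sqrt_pow2; lra. }
  assert (E2 : eucl (0,0) (u,v) = b).
  { unfold eucl; cbn [fst snd]. replace ((0-u)^2 + (0-v)^2) with (u^2 + v^2) by ring.
    rewrite Hv. replace (u^2 + (b^2-u^2)) with (b^2) by ring. apply sqrt_pow2; lra. }
  assert (E3 : eucl (a,0) (u,v) = e).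
  { unfold eucl; cbn [fst snd]. replace ((a-u)^2 + (0-v)^2) with (a^2 - 2*a*u + u^2 + v^2) by ring.
    rewrite Hv. replace (a ^ 2 - 2 * a * u + u ^ 2 + (b ^ 2 - u ^ 2)) with (e^2).
    apply sqrt_pow2; lra. unfold N in Hu. nra. }
  specialize (Hcat E1 E2 E3 s t Hs Ht).
  unfold eucl, comb in Hcat; cbn [fst snd] in Hcat.
  assert (Hd0 : 0 <= d (c1 s) (c2 t)) by apply (met_pos d Hm).
  match type of Hcat with _ <= sqrt ?Q => assert (HQ : 0 <= Q) by (apply Rplus_le_le_0_compat; apply pow2_ge_0);
    assert (Hsq : d (c1 s) (c2 t) ^2 <= Q) by (rewrite <- (pow2_sqrt Q HQ); apply pow_incr; lra) end.
  rewrite alg1 in Hsq; [| exact (Rgt_not_eq _ _ Ha) | exact (Rgt_not_eq _ _ Hb) | exact Hv].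
  change (d x z) with b in Hsq.
  assert (Hab : 0 < a * b) by nra.
  apply Rmult_le_compat_l with (r := a*b) in Hsq; [|lra].
  replace (a * b * (s ^ 2 + t ^ 2 - 2 * s * t * u / b)) with (a*b*(s^2+t^2) - s*t*(2*a*u)) in Hsq by (field; lra).
  replace (2*a*u) with N in Hsq by lra. exact Hsq.
Qed.

Lemma Lsame {X} (d : X -> X -> R) (Hm : IsMetric d) (Hc : CAT0 d)
  x y z c1 c2 : GeodSeg d c1 x y -> GeodSeg d c2 x z ->
  0 < d x y -> 0 < d x z -> forall t, 0 <= t -> t <= d x y -> t <= d x z ->
  d x y * d x z * (d (c1 t) (c2 t))^2 <= t^2 * d y z ^2.
Proof.
  intros G1 G2 Ha Hb t H0 H1 H2.
  pose proof (L_cos d Hm Hc x y z c1 c2 G1 G2 Ha Hb t t (conj H0 H1) (conj H0 H2)).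
  assert (0 <= t^2 * (d x y - d x z)^2) by (apply Rmult_le_pos; apply pow2_ge_0).
  lra.
Qed.

Lemma ray_seg {X} (d : X -> X -> R) c x T : IsRay d c -> c 0 = x -> 0 <= T ->
  d x (c T) = T /\ GeodSeg d c x (c T).
Proof.
  intros Hr H0 HT. assert (E : d x (c T) = T).
  { subst x. rewrite Hr by lra. rewrite Rabs_left1 by lra. lra. }
  split; auto. split; auto. rewrite E. split; auto.
  intros s t Hs Ht. apply Hr; lra.
Qed.

Lemma Stewart {X} (d : X -> X -> R) (Hm : IsMetric d) (Hc : CAT0 d)
  x p z g : GeodSeg d g x p -> 0 < d x p -> forall t del, 0 <= t -> 0 <= del ->
  t <= d x p -> d x z <= t + del -> d z p <= d x p - t + del ->
  d (g t) z ^2 <= 4*t*del + del^2.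
Proof.
  intros G HD t del Ht Hdel HtD Hb HE.
  assert (Hb0 : 0 <= d x z) by apply (met_pos d Hm).
  destruct (Req_dec (d x z) 0) as [Z|Z].
  - assert (x = z) by (apply Hm; auto). subst z.
    destruct G as [G0 [G1 G2]].
    assert (d (g t) x = t).
    { rewrite <- G0. rewrite G2 by lra. rewrite Rabs_right by lra. lra. }
    rewrite H. assert (d x p = d p x) by apply (met_sym d Hm).
    assert (t <= del) by lra. nra.
  - assert (Hbp : 0 < d x z) by lra.
    destruct (proj1 Hc x z) as [c2 G2].
    pose proof (L_cos d Hm Hc x p z g c2 G G2 HD Hbp t (d x z) (conj Ht HtD) (conj Hb0 (Rle_refl _))) as H.
    destruct G2 as [_ [G2e _]]. rewrite G2e in H.
    rewrite (met_sym d Hm p z) in H.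
    set (D := d x p) in *. set (b := d x z) in *. set (E := d z p) in *.
    set (q := d (g t) z) in *.
    assert (HE0 : 0 <= E) by apply (met_pos d Hm).
    assert (H' : D * q^2 <= D * (t^2 + b^2) - t * (D^2 + b^2 - E^2)).
    { apply Rmult_le_reg_l with b; [lra|]. nra. }
    assert (HE2 : E^2 <= (D - t + del)^2) by nra.
    assert (Hb2 : b^2 <= (t + del)^2) by nra.
    assert (H'' : D * q^2 <= D * (4*t*del + del^2)) by nra.
    apply Rmult_le_reg_l with D; lra.
Qed.

Lemma UNIQ {X} (d : X -> X -> R) (Hm : IsMetric d) (Hc : CAT0 d) c1 c2 K :
  IsRay d c1 -> IsRay d c2 -> c1 0 = c2 0 -> (forall T, 0 <= T -> d (c1 T) (c2 T) <= K) ->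
  forall t, 0 <= t -> c1 t = c2 t.
Proof.
  intros R1 R2 E0 HK t Ht.
  apply Hm. pose proof (met_pos d Hm (c1 t) (c2 t)) as Hq.
  destruct (Rle_lt_dec (d (c1 t) (c2 t)) 0) as [L|L]; [lra|exfalso].
  set (q := d (c1 t) (c2 t)) in *.
  assert (HK0 : 0 <= K) by (specialize (HK 0 (Rle_refl _)); pose proof (met_pos d Hm (c1 0) (c2 0)); lra).
  set (T := t + 1 + 2 * t * K / q).
  assert (HTq : T * q = (t+1) * q + 2 * t * K) by (unfold T; field; lra).
  assert (HT1 : t + 1 <= T).
  { unfold T. assert (0 <= 2 * t * K / q) by (apply Rmult_le_pos; [nra| apply Rlt_le, Rinv_0_lt_compat; lra]). lra. }
  destruct (ray_seg d c1 (c1 0) T R1 eq_refl ltac:(lra)) as [D1 G1].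
  destruct (ray_seg d c2 (c1 0) T R2 (eq_sym E0) ltac:(lra)) as [D2 G2].
  pose proof (Lsame d Hm Hc _ _ _ c1 c2 G1 G2 ltac:(lra) ltac:(lra) t Ht ltac:(lra) ltac:(lra)) as H.
  rewrite D1, D2 in H. fold q in H.
  pose proof (HK T ltac:(lra)).
  assert (0 <= d (c1 T) (c2 T)) by apply (met_pos d Hm).
  assert (d (c1 T) (c2 T) ^2 <= K^2) by nra.
  assert (T * T * q^2 <= t^2 * K^2) by nra.
  assert (T * q >= 2 * t * K + q) by nra.
  assert (0 <= t * K) by nra.
  assert ((2*t*K+q)^2 <= (T*q)^2) by (apply pow_incr; lra).
  assert ((T*q)^2 = T*T*q^2) by ring.
  nra.
Qed.

Lemma NEAR {X} (d : X -> X -> R) (Hm : IsMetric d) (Hc : CAT0 d) c cb x x0 K t eta :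
  IsRay d c -> c 0 = x -> IsRay d cb -> cb 0 = x0 ->
  (forall T, 0 <= T -> d (c T) (cb T) <= K) -> 0 <= t -> 0 < eta ->
  exists T0, 0 <= T0 /\ forall T, T0 <= T -> 0 < d x (cb T) /\ t <= d x (cb T) /\
    forall g, GeodSeg d g x (cb T) -> d (c t) (g t) < eta.
Proof.
  intros Rc Hc0 Rb Hb0 HK Ht He.
  set (d0 := d x x0).
  assert (Hd0 : 0 <= d0) by apply (met_pos d Hm).
  assert (HK0 : 0 <= K) by (specialize (HK 0 (Rle_refl _)); pose proof (met_pos d Hm (c 0) (cb 0)); lra).
  set (M := 2 * t^2 * K^2 / eta^2).
  assert (HM : M * eta^2 = 2 * t^2 * K^2) by (unfold M; field; lra).
  assert (HM0 : 0 <= M) by (unfold M; apply Rmult_le_pos; [nra| apply Rlt_le, Rinv_0_lt_compat; nra]).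
  exists (2 * d0 + 2 * t + 1 + M). split; [lra|]. intros T HT.
  destruct (ray_seg d cb x0 T Rb Hb0 ltac:(lra)) as [DT _].
  assert (HD : T - d0 <= d x (cb T)).
  { pose proof (met_tri d Hm x0 x (cb T)). rewrite (met_sym d Hm x0 x) in H. fold d0 in H. lra. }
  set (D := d x (cb T)) in *.
  assert (HDp : 0 < D) by lra. split; [lra|]. split; [lra|].
  intros g G.
  destruct (ray_seg d c x T Rc Hc0 ltac:(lra)) as [DC GC].
  assert (A1 : 0 < d x (c T)) by (rewrite DC; lra).
  assert (A2 : t <= d x (c T)) by (rewrite DC; lra).
  assert (A3 : t <= D) by lra.
  pose proof (Lsame d Hm Hc x (c T) (cb T) c g GC G A1 HDp t Ht A2 A3) as H.
  rewrite DC in H. fold D in H.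
  set (q := d (c t) (g t)) in *.
  assert (0 <= q) by apply (met_pos d Hm).
  pose proof (HK T ltac:(lra)).
  assert (0 <= d (c T) (cb T)) by apply (met_pos d Hm).
  assert (d (c T) (cb T) ^2 <= K^2) by nra.
  assert (HH : T * D * q^2 <= t^2 * K^2) by nra.
  destruct (Rlt_le_dec q eta) as [L|L]; [exact L|exfalso].
  assert (q^2 >= eta^2) by nra.
  assert (T * D >= T / 2) by nra.
  assert (T * D * q^2 >= T/2 * eta^2) by nra.
  assert (T * eta^2 >= (M + 1) * eta^2) by nra.
  nra.
Qed.

Lemma BV_lim {X} (d : X -> X -> R) (Hm : IsMetric d) (Hc : CAT0 d) x0 xi cb K2 z gz :
  IsRay d cb -> cb 0 = x0 -> (forall T, 0 <= T -> d (cb T) (xi T) <= K2) ->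
  BusemannVal d x0 xi z gz ->
  forall eps, 0 < eps -> exists Tz, 0 <= Tz /\ forall T, Tz <= T ->
    Rabs (d z (cb T) - d x0 (cb T) - gz) < eps.
Proof.
  intros Rb Hb0 HK2 [cz [[Rz [Hz0 [K3 HK3]]] Lz]] eps He.
  destruct (Lz eps He) as [T1 H1].
  assert (U : forall t, 0 <= t -> cz t = cb t).
  { apply (UNIQ d Hm Hc cz cb (K3 + K2) Rz Rb). congruence.
    intros T HT. pose proof (met_tri d Hm (cz T) (xi T) (cb T)).
    rewrite (met_sym d Hm (xi T) (cb T)) in H. specialize (HK3 T HT). specialize (HK2 T HT). lra. }
  exists (Rmax T1 0). split; [apply Rmax_r|]. intros T HT.
  rewrite <- U by (pose proof (Rmax_r T1 0); lra). apply H1. pose proof (Rmax_l T1 0); lra.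
Qed.

Lemma fiber {X} (d : X -> X -> R) (Hm : IsMetric d) (Hc : CAT0 d) x0 x s xi t :
  0 <= t -> (exists c, RayTo d c x xi /\ s = c t) ->
  forall gx, BusemannVal d x0 xi x gx ->
  d x s = t /\
  (forall z gz, BusemannVal d x0 xi z gz -> gz - gx <= - t + d z s) /\
  (forall z gz del, 0 <= del -> BusemannVal d x0 xi z gz -> d x z < t + del ->
     gz - gx < - t + del -> d z s <= sqrt (4 * t * del + del^2)).
Proof.
  intros Ht [c [[Rc [Hc0 [K1 HK1]]] Es]] gx Hgx. subst s.
  pose proof Hgx as Hgx'.
  destruct Hgx' as [cb [[Rb [Hb0 [K2 HK2]]] _]].
  assert (HK : forall T, 0 <= T -> d (c T) (cb T) <= K1 + K2).
  { intros T HT. pose proof (met_tri d Hm (c T) (xi T) (cb T)).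
    rewrite (met_sym d Hm (xi T) (cb T)) in H. specialize (HK1 T HT). specialize (HK2 T HT). lra. }
  pose proof (BV_lim d Hm Hc x0 xi cb K2 x gx Rb Hb0 HK2 Hgx) as LX.
  split; [apply (ray_seg d c x t Rc Hc0 Ht)|]. split.
  - intros z gz Hz. apply Rle_plus_epsilon. intros eps He.
    destruct (LX (eps/4) ltac:(lra)) as [Tx [Tx0 HTx]].
    destruct (BV_lim d Hm Hc x0 xi cb K2 z gz Rb Hb0 HK2 Hz (eps/4) ltac:(lra)) as [Tz [Tz0 HTz]].
    destruct (NEAR d Hm Hc c cb x x0 (K1+K2) t (eps/4) Rc Hc0 Rb Hb0 HK Ht ltac:(lra)) as [T0 [T00 HT0]].
    set (T := Rmax T0 (Rmax Tx Tz)).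
    assert (L0 : T0 <= T) by apply Rmax_l.
    assert (Lx : Tx <= T) by (eapply Rle_trans; [apply Rmax_l| apply Rmax_r]).
    assert (Lz : Tz <= T) by (eapply Rle_trans; [apply Rmax_r| apply Rmax_r]).
    destruct (HT0 T L0) as [HDp [HtD Hg]].
    destruct (proj1 Hc x (cb T)) as [g G].
    specialize (Hg g G).
    specialize (HTx T Lx). specialize (HTz T Lz).
    apply Rabs_def2 in HTx. apply Rabs_def2 in HTz.
    destruct G as [G0 [G1 G2]].
    assert (E : d (g t) (cb T) = d x (cb T) - t).
    { rewrite <- G1 at 1. rewrite G2 by lra. rewrite Rabs_left1 by lra. lra. }
    pose proof (met_tri d Hm z (c t) (cb T)).
    pose proof (met_tri d Hm (c t) (g t) (cb T)).
    lra.
  - intros z gz del Hdel Hz Hxz Hlt.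
    apply Rle_plus_epsilon. intros eps He.
    set (m := - t + del - (gz - gx)).
    destruct (LX (m/2) ltac:(unfold m; lra)) as [Tx [Tx0 HTx]].
    destruct (BV_lim d Hm Hc x0 xi cb K2 z gz Rb Hb0 HK2 Hz (m/2) ltac:(unfold m; lra)) as [Tz [Tz0 HTz]].
    destruct (NEAR d Hm Hc c cb x x0 (K1+K2) t eps Rc Hc0 Rb Hb0 HK Ht He) as [T0 [T00 HT0]].
    set (T := Rmax T0 (Rmax Tx Tz)).
    assert (L0 : T0 <= T) by apply Rmax_l.
    assert (Lx : Tx <= T) by (eapply Rle_trans; [apply Rmax_l| apply Rmax_r]).
    assert (Lz : Tz <= T) by (eapply Rle_trans; [apply Rmax_r| apply Rmax_r]).
    destruct (HT0 T L0) as [HDp [HtD Hg]].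
    destruct (proj1 Hc x (cb T)) as [g G].
    specialize (Hg g G).
    specialize (HTx T Lx). specialize (HTz T Lz).
    apply Rabs_def2 in HTx. apply Rabs_def2 in HTz.
    assert (HS := Stewart d Hm Hc x (cb T) z g G HDp t del Ht Hdel HtD ltac:(lra) ltac:(unfold m in *; lra)).
    assert (Hq : d (g t) z <= sqrt (4 * t * del + del ^ 2)).
    { rewrite <- (sqrt_pow2 (d (g t) z)) by apply (met_pos d Hm). apply sqrt_le_1_alt. exact HS. }
    pose proof (met_tri d Hm z (g t) (c t)).
    rewrite (met_sym d Hm z (g t)) in H. rewrite (met_sym d Hm (g t) (c t)) in H.
    lra.
Qed.

Lemma meas_ext {Om} (S : SigmaAlgebra Om) (A B : Om -> Prop) :
  (forall w, A w <-> B w) -> meas S A -> meas S B.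
Proof. intros H HA. assert (A = B) by (apply functional_extensionality; intro w; apply propositional_extensionality; auto).
  subst; auto. Qed.

Lemma meas_union2 {Om} (S : SigmaAlgebra Om) A B : meas S A -> meas S B -> meas S (fun w => A w \/ B w).
Proof. intros HA HB.
  apply meas_ext with (A := fun w => exists n, (match n with O => A | _ => B end) w).
  - intros w; split. intros [[|n] H]; auto. intros [H|H]; [exists O|exists 1%nat]; auto.
  - apply meas_cunion. intros [|n]; auto. Qed.

Lemma meas_inter2 {Om} (S : SigmaAlgebra Om) A B : meas S A -> meas S B -> meas S (fun w => A w /\ B w).
Proof. intros HA HB.
  apply meas_ext with (A := fun w => ~ (~ A w \/ ~ B w)).
  - intros w; split. intro H. split; apply NNPP; tauto. tauto.
  - apply meas_compl, meas_union2; apply meas_compl; auto. Qed.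

Lemma arch eps : 0 < eps -> exists m : nat, / (INR m + 1) < eps.
Proof. intros He. destruct (archimed_cor1 eps He) as [N [H1 H2]]. exists N.
  eapply Rlt_trans; [|exact H1]. apply Rinv_lt_contravar.
  apply Rmult_lt_0_compat; [apply lt_0_INR; auto| pose proof (pos_INR N); lra]. lra. Qed.

Lemma IZR_split z : IZR z = INR (Z.to_nat z) - INR (Z.to_nat (- z)).
Proof. assert (Z2 : forall y, (y <= 0)%Z -> Z.to_nat y = 0%nat) by (intros y Hy; destruct y; [reflexivity | lia | reflexivity]).
  rewrite !INR_IZR_INZ. destruct (Z_le_gt_dec 0 z).
  - rewrite Z2Nat.id by lia. rewrite (Z2 (-z)%Z) by lia. simpl. lra.
  - rewrite (Z2 z) by lia. rewrite Z2Nat.id by lia. simpl. rewrite opp_IZR. lra. Qed.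

Lemma dens l h : l < h -> exists i j m : nat, l < (INR i - INR j) / (INR m + 1) < h.
Proof. intros Hlh. destruct (arch (h - l) ltac:(lra)) as [m Hm].
  set (k := INR m + 1). assert (Hk : 0 < k) by (unfold k; pose proof (pos_INR m); lra).
  destruct (archimed (l * k)) as [A1 A2].
  exists (Z.to_nat (up (l*k))), (Z.to_nat (- up (l*k))), m. fold k.
  rewrite <- IZR_split. set (N := IZR (up (l*k))) in *.
  assert (E : N / k = N * / k) by reflexivity.
  assert (Hik : k * / k = 1) by (field; lra).
  assert (0 < / k) by (apply Rinv_0_lt_compat; lra).
  assert (E2 : N / k = l + (N - l*k) * / k) by (field; lra).
  rewrite E2. assert (0 < (N - l*k) * / k) by (apply Rmult_lt_0_compat; lra).
  assert ((N - l*k) * / k <= 1 * / k) by (apply Rmult_le_compat_r; lra).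
  change (INR m + 1) with k in Hm. split; lra. Qed.

Lemma meas_gt {Om} (S : SigmaAlgebra Om) f c : BorelFun S f -> meas S (fun w => c < f w).
Proof. intros Hf.
  apply meas_ext with (A := fun w => exists m, (fun m w => ~ (f w < c + / (INR m + 1))) m w).
  - intros w; split.
    + intros [m H]. assert (0 < / (INR m + 1)) by (apply Rinv_0_lt_compat; pose proof (pos_INR m); lra). lra.
    + intros H. destruct (arch (f w - c) ltac:(lra)) as [m Hm]. exists m. lra.
  - apply meas_cunion. intro m. apply meas_compl. apply Hf. Qed.

Lemma borel_diff {Om} (S : SigmaAlgebra Om) f g : BorelFun S f -> BorelFun S g ->
  BorelFun S (fun w => f w - g w).
Proof. intros Hf Hg a.
  set (q := fun i j m : nat => (INR i - INR j) / (INR m + 1)).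
  apply meas_ext with (A := fun w => exists i, (fun i w => exists j, (fun j w => exists m,
      (fun m w => f w < q i j m /\ q i j m - a < g w) m w) j w) i w).
  - intros w; split.
    + intros [i [j [m H]]]. lra.
    + intros H. destruct (dens (f w) (g w + a) ltac:(lra)) as [i [j [m Hq]]].
      exists i, j, m. fold (q i j m) in Hq. lra.
  - apply meas_cunion; intro i; apply meas_cunion; intro j; apply meas_cunion; intro m.
    apply meas_inter2. apply Hf. apply meas_gt. apply Hg. Qed.

Lemma delta_facts r t : 0 < r <= 1 -> 0 <= t ->
  0 < r^2/(4*t+2) /\ r^2/(4*t+2) <= r /\
  sqrt (4 * t * (r^2/(4*t+2)) + (r^2/(4*t+2))^2) < r.
Proof. intros Hr Ht. set (del := r^2/(4*t+2)).
  assert (E : del * (4*t+2) = r^2) by (unfold del; field; lra).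
  assert (0 < del) by (unfold del; apply Rdiv_lt_0_compat; nra).
  assert (del <= 1/2) by nra.
  split; [lra|]. split; [nra|].
  rewrite <- (sqrt_pow2 r) at 1 by lra. apply sqrt_lt_1_alt. split; nra. Qed.

Theorem mainTheorem11 (Om : Type) (S : SigmaAlgebra Om) (X : Om -> Type)
    (d : forall w, X w -> X w -> R) (L : (forall w, X w) -> Prop)
    (Hmet : forall w, IsMetric (d w)) (Hcat : forall w, CAT0 (d w))
    (Hprop : forall w, Proper (d w)) (Hunb : forall w, Unbounded (d w))
    (HL : BorelStructure S X d L)
    (x0 : forall w, X w) (Hx0 : L x0)
    (x : forall w, X w) (Hx : L x)
    (xi : forall w, R -> X w) (Hxi : forall w, IsRay (d w) (xi w))
    (Hxib : BorelBoundarySection S X d L x0 xi) :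
  forall t : R, 0 <= t ->
  forall s : forall w, X w,
    (forall w, exists c, RayTo (d w) c (x w) (xi w) /\ s w = c t) ->
    L s.
Proof.
  intros t Ht s Hs.
  destruct HL as [HL1 [HL2 [Dn [HDL HDd]]]].
  destruct (Hxib x Hx) as [gx [Bgx Hgx]].
  set (G := fun n => proj1_sig (constructive_indefinite_description _ (Hxib (Dn n) (HDL n)))).
  assert (HG : forall n, BorelFun S (G n) /\ forall w, BusemannVal (d w) (x0 w) (xi w) (Dn n w) (G n w))
    by (intro n; exact (proj2_sig (constructive_indefinite_description _ (Hxib (Dn n) (HDL n))))).
  apply HL2. intros y Hy a.
  set (r := fun k : nat => / (INR k + 1)).
  assert (Hr : forall k, 0 < r k <= 1).
  { intro k. unfold r. pose proof (pos_INR k). split. apply Rinv_0_lt_compat; lra.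
    rewrite <- Rinv_1. apply Rinv_le_contravar; lra. }
  set (del := fun k => r k ^2 / (4*t+2)).
  apply meas_ext with (A := fun w => exists k, (fun k w => exists n, (fun n w =>
     (d w (x w) (Dn n w) < t + del k /\ G n w - gx w < - t + del k) /\ d w (y w) (Dn n w) < a - r k) n w) k w).
  - intro w.
    destruct (fiber (d w) (Hmet w) (Hcat w) (x0 w) (x w) (s w) (xi w) t Ht (Hs w) (gx w) (Hgx w)) as [F0 [F1 F2]].
    split.
    + intros [k [n [[A B] C]]].
      destruct (delta_facts (r k) t (Hr k) Ht) as [D1 [D2 D3]]. fold (del k) in D1, D2, D3.
      pose proof (F2 (Dn n w) (G n w) (del k) ltac:(lra) (proj2 (HG n) w) A B).
      pose proof (met_tri (d w) (Hmet w) (y w) (Dn n w) (s w)). lra.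
    + intro H. destruct (arch ((a - d w (y w) (s w))/2) ltac:(lra)) as [k Hk]. fold (r k) in Hk.
      destruct (delta_facts (r k) t (Hr k) Ht) as [D1 [D2 D3]]. fold (del k) in D1, D2, D3.
      destruct (HDd w (s w) (del k) D1) as [n Hn].
      rewrite (met_sym (d w) (Hmet w)) in Hn.
      exists k, n. pose proof (F1 (Dn n w) (G n w) (proj2 (HG n) w)).
      pose proof (met_tri (d w) (Hmet w) (x w) (s w) (Dn n w)).
      pose proof (met_tri (d w) (Hmet w) (y w) (s w) (Dn n w)).
      rewrite (met_sym (d w) (Hmet w) (s w) (Dn n w)) in H1, H2.
      split; [split|]; lra.
  - apply meas_cunion; intro k; apply meas_cunion; intro n.
    apply meas_inter2; [apply meas_inter2|].
    + apply HL1; auto.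
    + apply borel_diff; [apply (proj1 (HG n)) | exact Bgx].
    + apply HL1; auto.
Qed.
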